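(* Let $\mathbb{F}$ be a field and let $m,n,r,d$ be integers with $m,n\ge2$, $d\ge1$ and $0<r<\min\{m,n\}$. Then $$\mathbb{F}[\lambda]^{m\times n}_{d,r}=\Big\{L(\lambda)R(\lambda): L\in\mathbb{F}[\lambda]^{m\times r},\ R\in\mathbb{F}[\lambda]^{r\times n},\ \deg(L_{*i})\le d,\ \deg(R_{i*})\le d,\ \deg(L_{*i})+\deg(R_{i*})\le d\ \text{for } i=1,\dots,r\Big\}.$$
   Context: $\mathbb{F}[\lambda]^{m\times n}_{d,r}$ is the set of $m\times n$ polynomial matrices over $\mathbb{F}$ of degree at most $d$ and normal rank (rank over $\mathbb{F}(\lambda)$) at most $r$. Degree of a polynomial vector: maximum degree of its entries, with $\deg 0=-\infty$. $L_{*i}$ is the $i$th column of $L$ and $R_{i*}$ the $i$th row of $R$. *)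

(* Defs.v *)
From HB Require Import structures.
From mathcomp Require Import all_boot all_order all_algebra.
From mathcomp Require Import fraction.
Set Implicit Arguments. Unset Strict Implicit. Unset Printing Implicit Defensive.
Import Order.TTheory GRing.Theory Num.Theory.
Local Open Scope ring_scope.

(* Degrees with -oo: None = -oo (degree of the zero polynomial/vector),
   Some k = degree k. *)
Definition ext_deg := option nat.

Definition deg_le (x : ext_deg) (d : nat) : bool :=
  match x with None => true | Some k => (k <= d)%N end.

Definition deg_add (x y : ext_deg) : ext_deg :=
  match x, y with Some a, Some b => Some (a + b)%N | _, _ => None end.

Definition col_deg (F : fieldType) (m r : nat) (L : 'M[{poly F}]_(m, r)) (i : 'I_r)
  : ext_deg :=
  let s := (\max_(k < m) size (L k i))%N in
  if s == 0%N then None else Some s.-1.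

Definition row_deg (F : fieldType) (r n : nat) (R : 'M[{poly F}]_(r, n)) (i : 'I_r)
  : ext_deg :=
  let s := (\max_(k < n) size (R i k))%N in
  if s == 0%N then None else Some s.-1.

Definition normal_rank (F : fieldType) (m n : nat) (P : 'M[{poly F}]_(m, n)) : nat :=
  \rank (map_mx (@FracField.tofrac {poly F}) P).

Definition in_Fdr (F : fieldType) (m n d r : nat) (P : 'M[{poly F}]_(m, n)) : Prop :=
  (forall i j, (size (P i j) <= d.+1)%N) /\ (normal_rank P <= r)%N.

(* Main.v *)
From HB Require Import structures.
From mathcomp Require Import all_boot all_order all_algebra.
Require Import Defs.
From mathcomp Require Import fraction generic_quotient zify.
From Stdlib Require Import Lia.
Set Implicit Arguments. Unset Strict Implicit. Unset Printing Implicit Defensive.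
Import GRing.Theory.
Local Open Scope ring_scope.
Local Open Scope quotient_scope.

Definition rsz (F : fieldType) (I : finType) (n : nat) (v : I -> 'I_n -> {poly F}) (i : I) : nat :=
  (\max_(j < n) size (v i j))%N.
Definition hc (F : fieldType) (I : finType) (n : nat) (v : I -> 'I_n -> {poly F}) (i : I) (j : 'I_n) : F :=
  (v i j)`_(rsz v i).-1.
Definition reduced (F : fieldType) (I : finType) (n : nat) (v : I -> 'I_n -> {poly F}) : Prop :=
  forall c : I -> F, (forall j, \sum_i c i * hc v i j = 0) -> forall i, rsz v i != 0%N -> c i = 0.

Lemma size_le_rsz (F : fieldType) (I : finType) n (v : I -> 'I_n -> {poly F}) i j :
  (size (v i j) <= rsz v i)%N.
Proof. exact: (leq_bigmax (F := fun j => size (v i j))). Qed.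

Lemma rsz0 (F : fieldType) (I : finType) n (v : I -> 'I_n -> {poly F}) i j :
  rsz v i = 0%N -> v i j = 0.
Proof. by move=> h; apply/eqP; rewrite -size_poly_eq0 -leqn0 -h size_le_rsz. Qed.

Lemma size_le_top (F : fieldType) (q : {poly F}) s :
  (size q <= s.+1)%N -> q`_s = 0 -> (size q <= s)%N.
Proof.
move=> Hs Hq; rewrite leqNgt; apply/negP => Hlt.
have e : size q = s.+1 by apply/eqP; rewrite eqn_leq Hs Hlt.
have : lead_coef q = 0 by rewrite /lead_coef e.
by move/eqP; rewrite lead_coef_eq0 => /eqP q0; rewrite q0 size_poly0 in e.
Qed.

Lemma coef_mul_top (F : fieldType) (p q : {poly F}) s :
  p != 0 -> (size q <= s.+1)%N -> (p * q)`_((size p).-1 + s) = lead_coef p * q`_s.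
Proof.
move=> p0 hq; have [qs0|qs0] := eqVneq q`_s 0.
  rewrite qs0 mulr0; apply: nth_default.
  apply: leq_trans (size_mul_leq _ _) _.
  have := size_le_top hq qs0; have := size_poly_gt0 p; rewrite p0 => /= hp hs.
  lia.
have es : size q = s.+1.
  by apply/eqP; rewrite eqn_leq hq /=; move: qs0; apply: contraR; rewrite -leqNgt => /(nth_default 0) ->.
have q0 : q != 0 by rewrite -size_poly_eq0 es.
have := lead_coefM p q; rewrite /lead_coef size_mul // es.
have -> : ((size p + s.+1).-2 = (size p).-1 + s)%N by move: (size_poly_gt0 p); rewrite p0; lia.
by [].
Qed.

Lemma pdp (F : fieldType) (I : finType) n (v : I -> 'I_n -> {poly F}) (a : I -> {poly F}) D :
  reduced v -> (forall j, (size (\sum_i a i * v i j)%R <= D)%N) ->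
  forall i, a i != 0 -> rsz v i != 0%N -> (size (a i) + rsz v i <= D.+1)%N.
Proof.
move=> red hD i0 a0 r0.
pose w i := if (a i != 0) && (rsz v i != 0%N) then (size (a i) + rsz v i)%N else 0%N.
pose N := (\max_i w i)%N.
have wi0 : w i0 = (size (a i0) + rsz v i0)%N by rewrite /w a0 r0.
have leN i : (w i <= N)%N := leq_bigmax i.
have [ist ism] : {ist | N = w ist} by apply: eq_bigmax; apply/card_gt0P; exists i0.
have sa0 : (0 < size (a i0))%N by rewrite size_poly_gt0.
have N2 : (2 <= N)%N.
  apply: leq_trans (leN i0); rewrite wi0; move: r0 sa0; rewrite -lt0n; lia.

pose c i := if w i == N then lead_coef (a i) else 0.
have coefN j i : (a i * v i j)`_(N.-2) = c i * hc v i j.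
  rewrite /c; case: eqP => [wN | wN].
  - have : w i != 0%N by rewrite wN -lt0n (leq_trans _ N2).
    rewrite /w; case: ifP => [/andP [ai ri] _|]; last by rewrite eqxx.
    have -> : N.-2 = ((size (a i)).-1 + (rsz v i).-1)%N.
      rewrite -wN /w ai ri /=; move: ai ri; rewrite -size_poly_eq0 => ai ri.
      move: ai ri; rewrite -!lt0n; case: (size (a i)) => [|x] //; case: (rsz v i) => [|y] // _ _; by rewrite addnS addSn.
    rewrite /hc; apply: coef_mul_top => //.
    by rewrite prednK ?lt0n // size_le_rsz.
  - rewrite mul0r; case hai : (a i != 0); last by move/negbFE/eqP: hai => ->; rewrite mul0r coef0.
    case hri : (rsz v i != 0%N); last by move/negbFE/eqP: hri => /rsz0 ->; rewrite mulr0 coef0.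
    apply: nth_default; apply: leq_trans (size_mul_leq _ _) _.
    have wi : w i = (size (a i) + rsz v i)%N by rewrite /w hai hri.
    have wlt : (w i < N)%N by rewrite ltn_neqAle leN andbT; apply/eqP.
    have := size_le_rsz v i j; move: wlt N2; rewrite wi; clear; lia.
have his : w ist != 0%N by rewrite -ism -lt0n (leq_trans _ N2).
have /andP [ais ris] : (a ist != 0) && (rsz v ist != 0%N) by move: his; rewrite /w; case: ifP; rewrite ?eqxx.
have cis : c ist != 0 by rewrite /c -ism eqxx lead_coef_eq0.
have [j hj] : exists j, \sum_i c i * hc v i j != 0.
  case: (boolP [exists j, \sum_i c i * hc v i j != 0]) => [/existsP//|/existsPn H].
  by move: cis; rewrite (red c _ ist ris) ?eqxx // => j; apply/eqP; rewrite -[_ == 0]negbK H.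
have : (\sum_i a i * v i j)`_N.-2 != 0 by rewrite coef_sum (eq_bigr _ (fun i _ => coefN j i)).
move=> hne.
have : (N.-2 < size (\sum_i a i * v i j)%R)%N.
  by rewrite ltnNge; apply: contra hne => /leq_sizeP ->.
move=> hlt; have := leq_trans hlt (hD j); have := leN i0; rewrite wi0; move: N2; clear; lia.
Qed.
Definition mf (F : fieldType) m n (R : 'M[{poly F}]_(m,n)) : 'I_m -> 'I_n -> {poly F} :=
  fun i j => R i j.
Definition mu (F : fieldType) m n (R : 'M[{poly F}]_(m,n)) : nat :=
  (\sum_(i < m) rsz (mf R) i)%N.


Lemma mu_lt (F : fieldType) m n (R R' : 'M[{poly F}]_(m,n)) i0 :
  (forall i, i != i0 -> forall j, R' i j = R i j) -> (rsz (mf R') i0 < rsz (mf R) i0)%N ->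
  (mu R' < mu R)%N.
Proof.
move=> heq hlt; rewrite /mu (bigD1 i0) //= [X in (_ < X)%N](bigD1 i0) //= -addSn.
rewrite leq_add // leq_eqVlt; apply/orP; left; apply/eqP; apply: eq_bigr => i hi.
by rewrite /rsz /mf; apply: eq_bigr => j _; rewrite heq.
Qed.

Lemma reduce_step (F : fieldType) m n (R : 'M[{poly F}]_(m,n)) (c : 'I_m -> F) i1 :
  (forall j, \sum_i c i * hc (mf R) i j = 0) -> rsz (mf R) i1 != 0%N -> c i1 != 0 ->
  exists A : 'M[{poly F}]_m, A *m A = 0 /\ (mu ((1 + A) *m R) < mu R)%N.
Proof.
move=> hc0 r1 c1.
pose P i := (rsz (mf R) i != 0%N) && (c i != 0).
have P1 : P i1 by rewrite /P r1 c1.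
case: (arg_maxnP (fun i => rsz (mf R) i) P1) => i0 /andP [r0 c0] maxi.
set d0 := rsz (mf R) i0.
pose w k := (c k / c i0)%:P * 'X^(d0 - rsz (mf R) k).
pose A : 'M[{poly F}]_m := \matrix_(i, k) if (i == i0) && (k != i0) then w k else 0.
exists A; split.
  apply/matrixP => i k; rewrite !mxE big1 // => l _; rewrite !mxE.
  case: (l =P i0) => [_|_]; first by rewrite andbF mul0r.
  by rewrite /= mulr0.
have Rne i : i != i0 -> forall j, ((1 + A) *m R) i j = R i j.
  move=> hi j; rewrite mulmxDl mul1mx mxE [X in _ + X]mxE big1 ?addr0 // => k _.
  by rewrite mxE (negbTE hi) mul0r.
have Ri0 j : ((1 + A) *m R) i0 j = \sum_k w k * R k j.
  rewrite mulmxDl mul1mx mxE [X in _ + X]mxE (bigD1 i0) //= mxE eqxx andbF mul0r add0r.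
  rewrite [RHS](bigD1 i0) //= /w subnn expr0 mulr1 divff // mul1r; congr (_ + _).
  by apply: eq_bigr => k hk; rewrite mxE eqxx hk.
have termc j k t : (w k * R k j)`_t = (c k / c i0) * ('X^(d0 - rsz (mf R) k) * R k j)`_t.
  by rewrite /w -mulrA coefCM.
have termz j k t : (d0 <= t)%N -> (w k * R k j)`_t = 0.
  move=> ht; rewrite termc; have [ck0|ck0] := eqVneq (c k) 0; first by rewrite ck0 !mul0r.
  have [rk0|rk0] := eqVneq (rsz (mf R) k) 0%N.
    by have Rk0 : R k j = 0 := rsz0 j rk0; rewrite Rk0 mulr0 coef0 mulr0.
  have rk : (rsz (mf R) k <= d0)%N by apply: maxi; rewrite /P rk0 ck0.
  rewrite coefXnM; case: ifP => _; first by rewrite mulr0.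
  rewrite nth_default ?mulr0 //; apply: leq_trans (size_le_rsz (mf R) k j) _.
  move: ht rk; clear; lia.
have termt j k : (w k * R k j)`_(d0.-1) = (c k / c i0) * hc (mf R) k j.
  rewrite termc; have [ck0|ck0] := eqVneq (c k) 0; first by rewrite ck0 !mul0r.
  have [rk0|rk0] := eqVneq (rsz (mf R) k) 0%N.
    by have Rk0 : R k j = 0 := rsz0 j rk0; rewrite /hc /mf Rk0 mulr0 !coef0.
  have rk : (rsz (mf R) k <= d0)%N by apply: maxi; rewrite /P rk0 ck0.
  rewrite coefXnM /hc; case: ifP => h.
    by move: h rk rk0; rewrite -lt0n; clear; lia.
  congr (_ * _`_ _); move: h rk rk0; rewrite -lt0n; clear; lia.
apply: (mu_lt (i0 := i0)) => //.
have : (rsz (mf ((1 + A) *m R)) i0 <= d0.-1)%N.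
  apply/bigmax_leqP => j _; rewrite /mf Ri0; apply/leq_sizeP => t ht.
  rewrite coef_sum; move: ht; rewrite leq_eqVlt => /orP [/eqP <-|ht].
    rewrite (eq_bigr _ (fun k _ => termt j k)).
    under eq_bigr do rewrite mulrAC; by rewrite -mulr_suml hc0 mul0r.
  by rewrite big1 // => k _; apply: termz; move: ht r0; rewrite -lt0n; clear; lia.
by move=> h; apply: leq_ltn_trans h _; move: r0; rewrite -lt0n; clear; lia.
Qed.

Lemma zero_step (F : fieldType) p m n (L : 'M[{poly F}]_(p,m)) (R : 'M[{poly F}]_(m,n)) i :
  rsz (mf R) i != 0%N -> (forall k, L k i = 0) ->
  L *m delta_mx i i = 0 /\ (mu ((1 - delta_mx i i) *m R) < mu R)%N.
Proof.
move=> ri hL; split.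
  apply/matrixP => k l; rewrite /delta_mx !mxE (bigD1 i) //= big1 ?addr0 ?hL ?mul0r // => q hq.
  by rewrite mxE (negbTE hq) mulr0.
have E p' j : ((1 - delta_mx i i) *m R) p' j = R p' j - (p' == i)%:R * R i j.
  rewrite mulmxBl mul1mx /delta_mx !mxE (bigD1 i) //= big1 ?addr0.
    by rewrite mxE eqxx andbT.
  by move=> q hq; rewrite mxE (negbTE hq) andbF mul0r.
apply: (mu_lt (i0 := i)).
  by move=> p' hp j; rewrite E (negbTE hp) mul0r subr0.
have -> : rsz (mf ((1 - delta_mx i i) *m R)) i = 0%N.
  apply/eqP; rewrite -leqn0; apply/bigmax_leqP => j _.
  by rewrite /mf E eqxx mul1r subrr size_poly0.
by rewrite lt0n.
Qed.

From Stdlib Require Import Classical.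

Lemma one_step (F : fieldType) m n (P : 'M[{poly F}]_(m,n)) (L K : 'M[{poly F}]_m) (R : 'M[{poly F}]_(m,n)) :
  P = L *m R -> R = K *m P ->
  (reduced (mf R) /\ forall i, rsz (mf R) i != 0%N -> exists k, L k i != 0) \/
  exists (L' K' : 'M[{poly F}]_m) (R' : 'M[{poly F}]_(m,n)),
    [/\ P = L' *m R', R' = K' *m P & (mu R' < mu R)%N].
Proof.
move=> hP hR.
case: (classic (reduced (mf R))) => [red|nred].
  case: (classic (forall i, rsz (mf R) i != 0%N -> exists k, L k i != 0)) => [fin|nfin].
    by left.
  right; have [i hi] := not_all_ex_not _ _ nfin; have [ri nex] := imply_to_and _ _ hi.
  have hL k : L k i = 0.
    by apply/eqP; apply/negPn/negP => h; apply: nex; exists k.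
  have [LA hmu] := zero_step ri hL.
  exists L, ((1 - delta_mx i i) *m K), ((1 - delta_mx i i) *m R); split => //.
    by rewrite mulmxA mulmxBr mulmx1 LA subr0.
  by rewrite -mulmxA -hR.
right; have [c hc] := not_all_ex_not _ _ nred; have [hc0 nall] := imply_to_and _ _ hc.
have [i1 hi1] := not_all_ex_not _ _ nall; have [r1 nc] := imply_to_and _ _ hi1.
have [A [AA hmu]] := reduce_step hc0 r1 (introN eqP nc).
exists (L *m (1 - A)), ((1 + A) *m K), ((1 + A) *m R); split => //.
  have E : (1 - A) *m (1 + A) = 1%:M.
    by rewrite mulmxBl mul1mx mulmxDr mulmx1 AA addr0 addrK.
  by rewrite mulmxA -[L *m (1 - A) *m (1 + A)]mulmxA E mulmx1.
by rewrite -mulmxA -hR.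
Qed.

Lemma main_ind (F : fieldType) m n (P : 'M[{poly F}]_(m,n)) N :
  forall (L K : 'M[{poly F}]_m) (R : 'M[{poly F}]_(m,n)),
  (mu R <= N)%N -> P = L *m R -> R = K *m P ->
  exists (L K : 'M[{poly F}]_m) (R : 'M[{poly F}]_(m,n)),
    [/\ P = L *m R, R = K *m P, reduced (mf R) &
        forall i, rsz (mf R) i != 0%N -> exists k, L k i != 0].
Proof.
elim: N => [|N IH] L K R hmu hP hR.
  case: (one_step hP hR) => [[red fin]|[L' [K' [R' [_ _ hlt]]]]].
    by exists L, K, R.
  by move: (leq_trans hlt hmu).
case: (one_step hP hR) => [[red fin]|[L' [K' [R' [hP' hR' hlt]]]]].
  by exists L, K, R.
by apply: (IH L' K' R') => //; rewrite -ltnS (leq_trans hlt hmu).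
Qed.

Lemma frac_clear1 (R : idomainType) (x : {fraction R}) :
  x * tofrac (\d_(repr x)) = tofrac (\n_(repr x)).
Proof.
rewrite -{1}[x]reprK; move: (repr x) => y.
change (FracField.mul (\pi y) (tofrac (\d_y)) = tofrac (\n_y)).
rewrite !piE. apply/eqmodP. rewrite /= FracField.equivfE.
rewrite /FracField.mulf /= !numden_Ratio ?mulf_neq0 ?oner_eq0 //.
- by rewrite !mulr1 mulrC.
- exact: denom_ratioP.
- exact: denom_ratioP.
Qed.

Lemma clear_row (F : fieldType) s (x : 'rV[{fraction {poly F}}]_s) :
  exists (a : 'I_s -> {poly F}) (D : {poly F}),
    D != 0 /\ forall t, tofrac (a t) = x 0 t * tofrac D.
Proof.
pose dn t := \d_(repr (x 0 t)).
exists (fun t => \n_(repr (x 0 t)) * \prod_(t' | t' != t) dn t'), (\prod_t dn t); split.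
  by apply/prodf_neq0 => t _; exact: denom_ratioP.
move=> t; rewrite [in RHS](bigD1 t) //= !rmorphM mulrA frac_clear1.
done.
Qed.

Lemma reduced_ext (F : fieldType) (I : finType) n (v w : I -> 'I_n -> {poly F}) :
  (forall i j, v i j = w i j) -> reduced v -> reduced w.
Proof.
move=> e red c hc1 i ri.
have er i' : rsz v i' = rsz w i' by apply: eq_bigr => j _; rewrite e.
have eh i' j : hc v i' j = hc w i' j by rewrite /hc er e.
apply: red; last by rewrite er.
move=> j; rewrite (eq_bigr (fun i => c i * hc w i j)) ?hc1 // => i2 _; by rewrite eh.
Qed.

Lemma reduced_comp (F : fieldType) (I J : finType) n (g : I -> J) (v : J -> 'I_n -> {poly F}) :
  injective g -> reduced v -> reduced (fun t => v (g t)).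
Proof.
move=> ginj red c hc1 t rt.
pose c' i := \sum_(t' | g t' == i) c t'.
have ec : c' (g t) = c t.
  by rewrite /c' (big_pred1 t) // => t'; rewrite /= (inj_eq ginj).
rewrite -ec; apply: red => //.
move=> j; rewrite -[RHS](hc1 j) (partition_big g xpredT) //=.
apply: eq_bigr => i _; rewrite /c' mulr_suml; apply: eq_bigr => t' /eqP <-.
by [].
Qed.

Lemma rank_reduced (F : fieldType) s n (v : 'M[{poly F}]_(s,n)) :
  reduced (mf v) -> (forall t, rsz (mf v) t != 0%N) ->
  \rank (map_mx (@FracField.tofrac {poly F}) v) = s.
Proof.
move=> red rz; set M := map_mx _ v.
apply/eqP; rewrite eqn_leq rank_leq_row /= leqNgt; apply/negP => hlt.
have K0 : kermx M != 0.
  by rewrite -mxrank_eq0 mxrank_ker -lt0n subn_gt0.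
have : [exists a, exists b, kermx M a b != 0].
  move: K0; apply: contraR => /existsPn H; apply/eqP/matrixP => a b.
  by move: (H a) => /existsPn /(_ b); rewrite negbK => /eqP ->; rewrite mxE.
case/existsP => t0 /existsP [u hu].
pose x := row t0 (kermx M).
have xM : x *m M = 0 by rewrite /x -row_mul mulmx_ker row0.
have [a [D [D0 ha]]] := clear_row x.
have au : a u != 0.
  rewrite -(tofrac_eq0 (R := {poly F})) ha; apply: mulf_neq0; last by rewrite tofrac_eq0.
  by rewrite /x [row _ _ _ _]mxE.
have sum0 j : \sum_t a t * v t j = 0.
  apply/eqP; rewrite -(tofrac_eq0 (R := {poly F})) rmorph_sum /=; apply/eqP.
  transitivity (tofrac D * (x *m M) 0 j); last by rewrite xM mxE mulr0.
  rewrite mxE mulr_sumr; apply: eq_bigr => t _.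
  rewrite rmorphM /= -[tofrac (a t)]/(tofrac (a t)) (ha t).
  by rewrite /M [map_mx _ _ _ _]mxE mulrAC mulrC.
have := pdp (D := 0%N) red _ au (rz u).
move=> h; have : (size (a u) + rsz (mf v) u <= 1)%N.
  by apply: h => j; rewrite (_ : \sum_i a i * mf v i j = 0) ?size_poly0 //; exact: sum0.
by move: (rz u) au; rewrite -lt0n -size_poly_gt0; clear; lia.
Qed.

Lemma deg_conds (F : fieldType) m r n d (L : 'M[{poly F}]_(m,r)) (R : 'M[{poly F}]_(r,n)) i :
  (forall k, (size (L k i) <= d.+1)%N) -> (forall j, (size (R i j) <= d.+1)%N) ->
  (forall k j, L k i != 0 -> R i j != 0 -> (size (L k i) + size (R i j) <= d.+2)%N) ->
  [/\ deg_le (col_deg L i) d, deg_le (row_deg R i) d &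
      deg_le (deg_add (col_deg L i) (row_deg R i)) d].
Proof.
move=> hL hR hLR; rewrite /col_deg /row_deg.
have hcs : (\max_(k < m) size (L k i) <= d.+1)%N by apply/bigmax_leqP => k _.
have hrs : (\max_(j < n) size (R i j) <= d.+1)%N by apply/bigmax_leqP => j _.
split.
- by case: eqP => //= _; rewrite -subn1 leq_subLR add1n.
- by case: eqP => //= _; rewrite -subn1 leq_subLR add1n.
case: eqP => // hc; case: eqP => //= hr.
have m0 : (0 < #|'I_m|)%N.
  rewrite card_ord lt0n; apply/eqP => e; apply: hc; apply/eqP; rewrite -leqn0.
  by apply/bigmax_leqP => k; have := ltn_ord k; rewrite {2}e.
have n0 : (0 < #|'I_n|)%N.
  rewrite card_ord lt0n; apply/eqP => e; apply: hr; apply/eqP; rewrite -leqn0.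
  by apply/bigmax_leqP => k; have := ltn_ord k; rewrite {2}e.
have [k hk] := eq_bigmax (fun k => size (L k i)) m0.
have [j hj] := eq_bigmax (fun j => size (R i j)) n0.
rewrite hk hj in hc hr *.
have := hLR k j; rewrite -!size_poly_eq0; move/eqP: hc => hc; move/eqP: hr => hr.
by move/(_ hc hr); clear -hc hr; lia.
Qed.

Lemma conds_deg (F : fieldType) m r n d (L : 'M[{poly F}]_(m,r)) (R : 'M[{poly F}]_(r,n)) i :
  deg_le (deg_add (col_deg L i) (row_deg R i)) d ->
  forall k j, L k i != 0 -> R i j != 0 -> (size (L k i) + size (R i j) <= d.+2)%N.
Proof.
rewrite /col_deg /row_deg => h k j Lk Rj.
have l1 : (size (L k i) <= \max_(k < m) size (L k i))%N := leq_bigmax (F := fun k => size (L k i)) k.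
have l2 : (size (R i j) <= \max_(j < n) size (R i j))%N := leq_bigmax (F := fun j => size (R i j)) j.
move: h; rewrite -size_poly_eq0 in Lk; rewrite -size_poly_eq0 in Rj.
case: eqP => [e|_]; first by rewrite e in l1; move: Lk l1; clear; lia.
case: eqP => [e|_]; first by rewrite e in l2; move: Rj l2; clear; lia.
by move: l1 l2 Lk Rj => /=; clear; lia.
Qed.

Lemma easy_dir (F : fieldType) m n r d (P : 'M[{poly F}]_(m,n)) (L : 'M[{poly F}]_(m,r)) (R : 'M[{poly F}]_(r,n)) :
  P = L *m R -> (forall i, deg_le (deg_add (col_deg L i) (row_deg R i)) d) -> in_Fdr d r P.
Proof.
move=> hP hd; split.
  move=> k j; rewrite hP mxE; apply: leq_trans (size_sum _ _ _) _.
  apply/bigmax_leqP => i _.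
  have [->|Lk] := eqVneq (L k i) 0; first by rewrite mul0r size_poly0.
  have [->|Rj] := eqVneq (R i j) 0; first by rewrite mulr0 size_poly0.
  apply: leq_trans (size_mul_leq _ _) _.
  by rewrite -subn1 leq_subLR add1n; apply: conds_deg.
rewrite /normal_rank hP map_mxM.
exact: leq_trans (mxrankM_maxr _ _) (rank_leq_row _).
Qed.

Lemma hard_dir (F : fieldType) m n r d (P : 'M[{poly F}]_(m,n)) :
  in_Fdr d r P ->
  exists (L : 'M[{poly F}]_(m, r)) (R : 'M[{poly F}]_(r, n)),
    [/\ P = L *m R &
      forall i : 'I_r,
        [/\ deg_le (col_deg L i) d, deg_le (row_deg R i) d &
            deg_le (deg_add (col_deg L i) (row_deg R i)) d]].
Proof.
case=> hsz hrk.
have [L [K [R [hP hR red fin]]]] :=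
  @main_ind F m n P (mu P) 1%:M 1%:M P (leqnn _) (esym (mul1mx P)) (esym (mul1mx P)).
set S := [set i | rsz (mf R) i != 0%N].
pose g (t : 'I_#|S|) : 'I_m := enum_val t.
have gS t : rsz (mf R) (g t) != 0%N by have := enum_valP t; rewrite inE.
have ginj : injective g := enum_val_inj.
have bnd k i : L k i != 0 -> rsz (mf R) i != 0%N -> (size (L k i) + rsz (mf R) i <= d.+2)%N.
  move=> Lk ri; apply: (pdp (a := fun i => L k i)) red _ _ Lk ri => j.
  have -> : \sum_i L k i * mf R i j = P k j by rewrite hP mxE.
  exact: hsz.
have rb i : rsz (mf R) i != 0%N -> (rsz (mf R) i <= d.+1)%N.
  move=> ri; have [k Lk] := fin i ri; have := bnd k i Lk ri.
  by rewrite -size_poly_eq0 in Lk; move: Lk; rewrite -lt0n; clear; lia.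
pose LS : 'M[{poly F}]_(m, #|S|) := \matrix_(k, t) L k (g t).
pose RS : 'M[{poly F}]_(#|S|, n) := \matrix_(t, j) R (g t) j.
have hPS : P = LS *m RS.
  apply/matrixP => k j; rewrite hP !mxE.
  rewrite (bigID (fun i => i \in S)) /= [X in _ + X]big1 ?addr0; last first.
    move=> i; rewrite inE negbK => /eqP ri.
    by have Rz : R i j = 0 := rsz0 j ri; rewrite Rz mulr0.
  rewrite big_enum_val; apply: eq_bigr => t _; by rewrite !mxE.
have sS : (#|S| <= r)%N.
  have r1 : \rank (map_mx (@FracField.tofrac {poly F}) RS) = #|S|.
    apply: rank_reduced.
      apply: (reduced_ext (v := fun t => mf R (g t))); first by move=> t j; rewrite /mf mxE.
      exact: reduced_comp.
    move=> t; rewrite (_ : rsz (mf RS) t = rsz (mf R) (g t)) ?gS //.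
    by apply: eq_bigr => j _; rewrite /mf mxE.
  pose G : 'M[{poly F}]_(#|S|, m) := \matrix_(t, i) (i == g t)%:R.
  have eRS : RS = G *m K *m P.
    rewrite -mulmxA -hR; apply/matrixP => t j; rewrite !mxE (bigD1 (g t)) //= big1 ?addr0.
      by rewrite mxE eqxx mul1r.
    by move=> i hi; rewrite mxE (negbTE hi) mul0r.
  by rewrite -r1 eRS !map_mxM; apply: leq_trans (mxrankM_maxr _ _) hrk.
pose L' : 'M[{poly F}]_(m, r) :=
  \matrix_(k, i) oapp (fun t => LS k t) 0 (insub (val i) : option 'I_#|S|).
pose R' : 'M[{poly F}]_(r, n) :=
  \matrix_(i, j) oapp (fun t => RS t j) 0 (insub (val i) : option 'I_#|S|).
exists L', R'; split.
  apply/matrixP => k j; rewrite hPS !mxE.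
  pose G x := oapp (fun t => LS k t * RS t j) 0 (insub x : option 'I_#|S|).
  rewrite (eq_bigr (fun t => G (val t))); last by move=> t _; rewrite /G valK.
  rewrite (big_ord_widen r G sS) big_mkcond; apply: eq_bigr => i _; rewrite !mxE /G.
  case: insubP => [t it vt|ni] /=; first by rewrite it.
  by rewrite (negbTE ni) mulr0.
move=> i; apply: deg_conds.
- move=> k; rewrite mxE; case: insubP => [t _ _|_] /=; last by rewrite size_poly0.
  rewrite mxE; have [->|Lk] := eqVneq (L k (g t)) 0; first by rewrite size_poly0.
  have h2 := bnd k (g t) Lk (gS t); have h1 := gS t; rewrite -lt0n in h1.
  by rewrite -ltnS; apply: (leq_trans _ h2); rewrite -addn1 leq_add2l.
- move=> j; rewrite mxE; case: insubP => [t _ _|_] /=; last by rewrite size_poly0.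
  rewrite mxE; apply: leq_trans (size_le_rsz (mf R) (g t) j) _; apply: rb; exact: gS.
- move=> k j; rewrite !mxE; case: insubP => [t _ _|_] /=; last by rewrite eqxx.
  rewrite !mxE => Lk _; apply: leq_trans (bnd k (g t) Lk (gS t)).
  by rewrite leq_add2l; exact: size_le_rsz.
Qed.

Unset Implicit Arguments.

Theorem theorem4p1 (F : fieldType) (m n r d : nat)
  (hm : (2 <= m)%N) (hn : (2 <= n)%N) (hd : (1 <= d)%N)
  (hr0 : (0 < r)%N) (hr : (r < minn m n)%N)
  (P : 'M[{poly F}]_(m, n)) :
  in_Fdr d r P <->
  exists (L : 'M[{poly F}]_(m, r)) (R : 'M[{poly F}]_(r, n)),
    [/\ P = L *m R &
      forall i : 'I_r,
        [/\ deg_le (col_deg L i) d, deg_le (row_deg R i) d &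
            deg_le (deg_add (col_deg L i) (row_deg R i)) d]].
Proof.
split; first exact: hard_dir.
case=> L [R [hP hi]]; apply: (easy_dir hP) => i; by case: (hi i).
Qed.
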